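(* There exist absolute constants $0<C_0<1/4$, $c>0$ and $N_0>0$ such that the following holds. Let $P$ be a set of $n$ points in $\mathbb{R}^2$ in general position, let $0<\epsilon<1$ with $\epsilon n\ge N_0$, let $0<\sigma\le 1$, let $r_0\ge 1$ be an integer, let $\Pi\subseteq\binom{P}{2}$, and put $\epsilon_0:=\sigma\epsilon/(100 r_0)$. Let $K$ be a convex set that is $(\epsilon,\sigma/2)$-restricted to $(P,\Pi)$, with witness set $P_K$ and $\Pi_K=\binom{P_K}{2}\cap\Pi$, and suppose that $K$ is not $(C_0\sigma\epsilon)$-crowded in $\Lambda(r_0)$. Then there is a slab $\tau\in\Lambda(r_0)$ (a middle slab for $K$) such that (M1) $\epsilon_0 n\le |P_K\cap\tau|\le C_0\sigma\epsilon n$, and (M2) at least $c\,\sigma\epsilon^2n^2/r_0$ edges of $\Pi_K$ cross $\tau$ transversally.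
   Context: General position: no three points of $P$ are collinear and no two lie on a common vertical line. $\binom{P}{2}$ denotes the set of segments spanned by pairs of points of $P$. A convex set $K$ is $(\epsilon,\sigma)$-restricted to $(P,\Pi)$ if $P\cap K$ contains a subset $P_K$ of exactly $\lceil\epsilon n\rceil$ points such that $\binom{P_K}{2}\cap\Pi$ contains at least $\sigma\binom{\lceil \epsilon n\rceil}{2}$ edges (one such $P_K$ is fixed as the witness set). For an integer $r\ge1$, ${\cal Y}(r)$ is a set of $r$ vertical lines, none through a point of $P$, such that each of the $r+1$ open vertical slabs of $\mathbb{R}^2\setminus\bigcup{\cal Y}(r)$ contains between $\lfloor n/(r+1)\rfloor$ and $\lceil n/(r+1)\rceil$ points of $P$; $\Lambda(r)$ is the collection of these slabs. $K$ is $\epsilon'$-crowded in $\Lambda(r)$ if some slab of $\Lambda(r)$ contains at least $\epsilon' n$ points of $P\cap K$. An edge $pq$ crosses a slab $\tau$ transversally if the segment $pq$ meets $\tau$ and neither $p$ nor $q$ lies in $\tau$. *)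

(* Defs.v *)
From Stdlib Require Import Reals Lra Lia List Classical ClassicalEpsilon.
Import ListNotations.
Open Scope R_scope.

Definition point : Type := (R * R)%type.

Definition ceilZ (x : R) : Z := (- Int_part (- x))%Z.
Definition ceil_nat (x : R) : nat := Z.to_nat (ceilZ x).

Definition decP (Q : Prop) : bool :=
  if excluded_middle_informative Q then true else false.

Definition pcount (Q : point -> Prop) (s : list point) : nat :=
  length (filter (fun p => decP (Q p)) s).

Fixpoint pair_count (Q : point -> point -> Prop) (s : list point) : nat :=
  match s with
  | [] => 0%nat
  | x :: s' => (pcount (Q x) s' + pair_count Q s')%nat
  end.

Definition collinear (p q r : point) : Prop :=
  (fst q - fst p) * (snd r - snd p) - (snd q - snd p) * (fst r - fst p) = 0.

Definition general_position (P : list point) : Prop :=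
  (forall p q r, In p P -> In q P -> In r P -> p <> q -> q <> r -> p <> r ->
     ~ collinear p q r) /\
  (forall p q, In p P -> In q P -> p <> q -> fst p <> fst q).

Definition convex (K : point -> Prop) : Prop :=
  forall p q t, K p -> K q -> 0 <= t <= 1 ->
    K ((1 - t) * fst p + t * fst q, (1 - t) * snd p + t * snd q).

Definition binom2 (k : nat) : R := INR k * (INR k - 1) / 2.

Definition restricted_witness (P : list point) (Pi : point -> point -> Prop)
    (K : point -> Prop) (eps sigma : R) (PK : list point) : Prop :=
  let k := ceil_nat (eps * INR (length P)) in
  NoDup PK /\ incl PK P /\ (forall p, In p PK -> K p) /\
  length PK = k /\
  INR (pair_count Pi PK) >= sigma * binom2 k.

(* Y(r): the list ys of r vertical lines x = ys_0 < ... < ys_(r-1) *)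
(* slab i (0 <= i <= r) is the open strip between line i-1 and line i *)
Definition in_slab (ys : list R) (i : nat) (p : point) : Prop :=
  (i = 0%nat \/ nth (i - 1) ys 0 < fst p) /\
  (i = length ys \/ fst p < nth i ys 0).

Definition slab_system (P : list point) (r : nat) (ys : list R) : Prop :=
  length ys = r /\
  (forall i, (i + 1 < r)%nat -> nth i ys 0 < nth (i + 1) ys 0) /\
  (forall p y, In p P -> In y ys -> fst p <> y) /\
  (forall i, (i <= r)%nat ->
     (length P / (r + 1) <= pcount (in_slab ys i) P <=
      (length P + r) / (r + 1))%nat).

Definition crowded (P : list point) (ys : list R) (K : point -> Prop) (eps' : R) : Prop :=
  exists i, (i <= length ys)%nat /\
    exists L : list point, NoDup L /\ incl L P /\
      (forall p, In p L -> K p /\ in_slab ys i p) /\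
      INR (length L) >= eps' * INR (length P).

Definition crosses (ys : list R) (i : nat) (p q : point) : Prop :=
  (exists t, 0 <= t <= 1 /\
     in_slab ys i ((1 - t) * fst p + t * fst q, (1 - t) * snd p + t * snd q)) /\
  ~ in_slab ys i p /\ ~ in_slab ys i q.

(* Main.v *)
Require Import Defs.
From Stdlib Require Import Reals List Lra Lia Classical ClassicalEpsilon Psatz ZArith.
Import ListNotations.
Open Scope R_scope.

Lemma decP_true (Q:Prop) : Q -> decP Q = true.
Proof. intro H; unfold decP; destruct (excluded_middle_informative Q); tauto. Qed.
Lemma decP_false (Q:Prop) : ~Q -> decP Q = false.
Proof. intro H; unfold decP; destruct (excluded_middle_informative Q); tauto. Qed.
Lemma decP_inv (Q:Prop) : decP Q = true -> Q.
Proof. unfold decP; destruct (excluded_middle_informative Q); [auto|discriminate]. Qed.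

Lemma pcount_cons Q x s : pcount Q (x::s) = ((if decP (Q x) then 1 else 0) + pcount Q s)%nat.
Proof. unfold pcount; simpl; destruct (decP (Q x)); reflexivity. Qed.
Lemma pcount_T (Q : point -> Prop) x s : Q x -> pcount Q (x::s) = S (pcount Q s).
Proof. intro h; rewrite pcount_cons, decP_true by auto; reflexivity. Qed.
Lemma pcount_F (Q : point -> Prop) x s : ~ Q x -> pcount Q (x::s) = pcount Q s.
Proof. intro h; rewrite pcount_cons, decP_false by auto; reflexivity. Qed.

Lemma pcount_False s : pcount (fun _ => False) s = 0%nat.
Proof. induction s as [|x s IH]; [reflexivity|]. rewrite pcount_F by tauto. lia. Qed.

Lemma pcount_mono (Q1 Q2 : point -> Prop) s :
  (forall x, In x s -> Q1 x -> Q2 x) -> (pcount Q1 s <= pcount Q2 s)%nat.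
Proof.
  induction s as [|x s IH]; intros H; [cbn; lia|].
  rewrite !pcount_cons.
  assert (IH' := IH (fun y Hy => H y (or_intror Hy))).
  destruct (classic (Q1 x)) as [h|h].
  - rewrite (decP_true _ h), (decP_true _ (H x (or_introl eq_refl) h)); lia.
  - rewrite (decP_false _ h); destruct (decP (Q2 x)); lia.
Qed.

Lemma pcount_or Q1 Q2 s : (pcount (fun x => Q1 x \/ Q2 x) s <= pcount Q1 s + pcount Q2 s)%nat.
Proof.
  induction s as [|x s IH]; [cbn; lia|]. rewrite !pcount_cons.
  destruct (classic (Q1 x)) as [h|h].
  - rewrite (decP_true (Q1 x \/ Q2 x)) by tauto; rewrite (decP_true _ h). destruct (decP (Q2 x)); lia.
  - rewrite (decP_false _ h). destruct (classic (Q2 x)) as [h2|h2].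
    + rewrite (decP_true (Q1 x \/ Q2 x)) by tauto; rewrite (decP_true _ h2); lia.
    + rewrite (decP_false (Q1 x \/ Q2 x)) by tauto; rewrite (decP_false _ h2); lia.
Qed.

Lemma pcount_le_length Q s : (pcount Q s <= length s)%nat.
Proof. induction s as [|x s IH]; [cbn; lia|]. rewrite pcount_cons; simpl; destruct (decP (Q x)); lia. Qed.

Lemma pcount_union (Q : nat -> point -> Prop) js s m :
  (forall j, In j js -> INR (pcount (Q j) s) <= m) ->
  INR (pcount (fun x => exists j, In j js /\ Q j x) s) <= INR (length js) * m.
Proof.
  induction js as [|j0 js IH]; intros H.
  - assert (Hle: (pcount (fun x => exists j, In j [] /\ Q j x) s <= pcount (fun _ => False) s)%nat)
      by (apply pcount_mono; intros x _ [j [[] _]]).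
    rewrite pcount_False in Hle. replace (pcount _ s) with 0%nat by lia. simpl; lra.
  - assert (Hle: (pcount (fun x => exists j, In j (j0::js) /\ Q j x) s <=
                  pcount (fun x => Q j0 x \/ exists j, In j js /\ Q j x) s)%nat).
    { apply pcount_mono; intros x _ [j [[<-|Hj] Hq]]; [left; auto | right; eauto]. }
    pose proof (pcount_or (Q j0) (fun x => exists j, In j js /\ Q j x) s).
    assert (H1 := H j0 (or_introl eq_refl)).
    assert (H2 := IH (fun j Hj => H j (or_intror Hj))).
    apply le_INR in Hle. apply le_INR in H0. rewrite plus_INR in H0.
    simpl length. rewrite S_INR. lra.
Qed.

Lemma pair_mono (Q1 Q2 : point -> point -> Prop) s :
  (forall x y, In x s -> In y s -> Q1 x y -> Q2 x y) -> (pair_count Q1 s <= pair_count Q2 s)%nat.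
Proof.
  induction s as [|x s IH]; intros H; [cbn; lia|]. simpl.
  assert (IH' := IH (fun a b Ha Hb => H a b (or_intror Ha) (or_intror Hb))).
  assert (pcount (Q1 x) s <= pcount (Q2 x) s)%nat.
  { apply pcount_mono; intros y Hy; apply H; simpl; auto. }
  lia.
Qed.

Lemma pair_or Q1 Q2 s : (pair_count (fun x y => Q1 x y \/ Q2 x y) s <= pair_count Q1 s + pair_count Q2 s)%nat.
Proof.
  induction s as [|x s IH]; [cbn; lia|]. simpl.
  pose proof (pcount_or (Q1 x) (Q2 x) s). lia.
Qed.

Lemma pair_False s : pair_count (fun _ _ => False) s = 0%nat.
Proof. induction s as [|x s IH]; [reflexivity|]. simpl. rewrite IH, pcount_False. lia. Qed.

Lemma pair_union (Q : nat -> point -> point -> Prop) js s m :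
  (forall j, In j js -> INR (pair_count (Q j) s) <= m) ->
  INR (pair_count (fun x y => exists j, In j js /\ Q j x y) s) <= INR (length js) * m.
Proof.
  induction js as [|j0 js IH]; intros H.
  - assert (Hle: (pair_count (fun x y => exists j, In j [] /\ Q j x y) s <= pair_count (fun _ _ => False) s)%nat)
      by (apply pair_mono; intros x y _ _ [j [[] _]]).
    rewrite pair_False in Hle. replace (pair_count _ s) with 0%nat by lia. simpl; lra.
  - assert (Hle: (pair_count (fun x y => exists j, In j (j0::js) /\ Q j x y) s <=
                  pair_count (fun x y => Q j0 x y \/ exists j, In j js /\ Q j x y) s)%nat).
    { apply pair_mono; intros x y _ _ [j [[<-|Hj] Hq]]; [left; auto | right; eauto]. }
    pose proof (pair_or (Q j0) (fun x y => exists j, In j js /\ Q j x y) s).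
    assert (H1 := H j0 (or_introl eq_refl)).
    assert (H2 := IH (fun j Hj => H j (or_intror Hj))).
    apply le_INR in Hle. apply le_INR in H0. rewrite plus_INR in H0.
    simpl length. rewrite S_INR. lra.
Qed.

Lemma pair_row (Q : point -> point -> Prop) s m :
  (forall x, In x s -> INR (pcount (Q x) s) <= m) ->
  INR (pair_count Q s) <= INR (length s) * m.
Proof.
  induction s as [|x s IH]; intros H; [simpl; lra|].
  simpl pair_count. simpl length. rewrite plus_INR, S_INR.
  assert (H1 : INR (pcount (Q x) s) <= m).
  { eapply Rle_trans; [|apply (H x (or_introl eq_refl))]. apply le_INR.
    rewrite pcount_cons; lia. }
  assert (H2 : INR (pair_count Q s) <= INR (length s) * m).
  { apply IH. intros y Hy. eapply Rle_trans; [|apply (H y (or_intror Hy))]. apply le_INR.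
    rewrite pcount_cons; lia. }
  lra.
Qed.

Lemma pair_left (A : point -> Prop) s :
  INR (pair_count (fun x y => A x) s) <= INR (pcount A s) * INR (length s).
Proof.
  induction s as [|x s IH]; [simpl; lra|].
  simpl pair_count. simpl length. rewrite pcount_cons, plus_INR, S_INR, plus_INR.
  destruct (classic (A x)) as [h|h].
  - rewrite decP_true by auto. pose proof (pcount_le_length (fun _ => A x) s).
    apply le_INR in H. pose proof (pos_INR (pcount A s)). simpl INR. nra.
  - rewrite decP_false by auto.
    assert (pcount (fun _ => A x) s <= pcount (fun _ => False) s)%nat by (apply pcount_mono; tauto).
    rewrite pcount_False in H. replace (pcount (fun _ => A x) s) with 0%nat by lia.
    pose proof (pos_INR (pcount A s)). pose proof (pos_INR (length s)). simpl INR. nra.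
Qed.

Lemma pair_right (A : point -> Prop) s :
  INR (pair_count (fun x y => A y) s) <= INR (length s) * INR (pcount A s).
Proof. apply pair_row. intros; apply Rle_refl. Qed.

Definition sorted_ys (ys : list R) : Prop :=
  forall i, (i + 1 < length ys)%nat -> nth i ys 0 < nth (i + 1) ys 0.

Lemma ys_mono ys : sorted_ys ys -> forall i j, (i <= j)%nat -> (j < length ys)%nat ->
  nth i ys 0 <= nth j ys 0.
Proof.
  intros Hs i j. induction j as [|j IH]; intros Hij Hj.
  - replace i with 0%nat by lia; lra.
  - destruct (Nat.eq_dec i (S j)) as [->|Hne]; [lra|].
    assert (nth i ys 0 <= nth j ys 0) by (apply IH; lia).
    assert (nth j ys 0 < nth (j+1) ys 0) by (apply Hs; lia).
    replace (S j) with (j+1)%nat by lia. lra.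
Qed.

Lemma slab_unique ys p i j : sorted_ys ys -> in_slab ys i p -> in_slab ys j p ->
  (i <= length ys)%nat -> (j <= length ys)%nat -> i = j.
Proof.
  intros Hs Hi Hj Hil Hjl.
  assert (forall a b, in_slab ys a p -> in_slab ys b p -> (a < b)%nat -> (b <= length ys)%nat -> False).
  { intros a b [_ Ha] [Hb _] Hab Hb2.
    destruct Ha as [Ha|Ha]; [lia|]. destruct Hb as [Hb|Hb]; [lia|].
    assert (nth a ys 0 <= nth (b-1) ys 0) by (apply ys_mono; auto; lia). lra. }
  destruct (lt_eq_lt_dec i j) as [[h|h]|h]; auto; exfalso; eauto.
Qed.

Lemma slab_exists ys p : sorted_ys ys -> (forall y, In y ys -> fst p <> y) ->
  exists i, (i <= length ys)%nat /\ in_slab ys i p.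
Proof.
  intros Hs Hoff.
  assert (forall d k, (k + d = length ys)%nat -> (k = 0%nat \/ nth (k-1) ys 0 < fst p) ->
           exists i, (i <= length ys)%nat /\ in_slab ys i p).
  { induction d as [|d IH]; intros k Hk Hlow.
    - exists k; split; [lia|]; split; auto; left; lia.
    - destruct (Rlt_or_le (fst p) (nth k ys 0)) as [h|h].
      + exists k; split; [lia|]; split; auto.
      + assert (fst p <> nth k ys 0) by (apply Hoff, nth_In; lia).
        apply (IH (S k)); [lia|]. right. replace (S k - 1)%nat with k by lia. lra. }
  apply (H (length ys) 0%nat); auto; lia.
Qed.

Lemma seg_x (u v X : R) : (u < X < v) \/ (v < X < u) ->
  exists t, 0 <= t <= 1 /\ (1 - t) * u + t * v = X.
Proof.
  intros H. assert (Hd : v - u <> 0) by lra.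
  set (t := (X - u) / (v - u)).
  assert (Ht : t * (v - u) = X - u) by (unfold t; field; auto).
  exists t. split.
  - destruct H; split; nra.
  - replace ((1 - t) * u + t * v) with (u + t * (v - u)) by ring. lra.
Qed.

Lemma crossing ys x y a b j : sorted_ys ys -> in_slab ys a x -> in_slab ys b y ->
  (a <= length ys)%nat -> (b <= length ys)%nat -> (j <= length ys)%nat ->
  ((a < j < b)%nat \/ (b < j < a)%nat) -> crosses ys j x y.
Proof.
  intros Hs Ha Hb Hal Hbl Hjl Hj.
  set (X := (nth (j-1) ys 0 + nth j ys 0) / 2).
  assert (Hj0 : (0 < j)%nat) by lia.
  assert (Hjr : (j < length ys)%nat) by lia.
  assert (Hlt : nth (j-1) ys 0 < nth j ys 0).
  { replace j with (j - 1 + 1)%nat at 2 by lia. apply Hs. lia. }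
  assert (HX : nth (j-1) ys 0 < X < nth j ys 0) by (unfold X; lra).
  assert (Hsmall : forall z c, in_slab ys c z -> (c < j)%nat -> fst z < nth (j-1) ys 0).
  { intros z c [_ [Hc|Hc]] Hcj; [lia|].
    assert (nth c ys 0 <= nth (j-1) ys 0) by (apply ys_mono; auto; lia). lra. }
  assert (Hbig : forall z c, in_slab ys c z -> (j < c)%nat -> (c <= length ys)%nat -> nth j ys 0 < fst z).
  { intros z c [[Hc|Hc] _] Hcj Hcl; [lia|].
    assert (nth j ys 0 <= nth (c-1) ys 0) by (apply ys_mono; auto; lia). lra. }
  split; [|split].
  - destruct (seg_x (fst x) (fst y) X) as [t [Ht Hx]].
    { destruct Hj as [Hj|Hj].
      + left. pose proof (Hsmall x a Ha ltac:(lia)). pose proof (Hbig y b Hb ltac:(lia) Hbl). lra.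
      + right. pose proof (Hsmall y b Hb ltac:(lia)). pose proof (Hbig x a Ha ltac:(lia) Hal). lra. }
    exists t; split; auto. unfold in_slab; cbn [fst]; rewrite Hx. split; right; lra.
  - intro H. assert (a = j) by (eapply slab_unique; eauto). lia.
  - intro H. assert (b = j) by (eapply slab_unique; eauto). lia.
Qed.

Lemma ceil_ge x : 0 < x -> x <= INR (ceil_nat x).
Proof.
  intros Hx. unfold ceil_nat, ceilZ.
  destruct (base_Int_part (- x)) as [H1 H2].
  assert (Hz : x <= IZR (- Int_part (- x))) by (rewrite opp_IZR; lra).
  assert (0 <= - Int_part (- x))%Z by (apply le_IZR; lra).
  rewrite INR_IZR_INZ, Z2Nat.id by auto. exact Hz.
Qed.

Theorem mainTheorem5 :
  exists C0 c N0 : R, 0 < C0 < 1/4 /\ 0 < c /\ 0 < N0 /\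
  forall (P : list point) (n : nat) (eps sigma : R) (r0 : nat)
         (Pi : point -> point -> Prop) (ys : list R)
         (K : point -> Prop) (PK : list point),
    NoDup P -> length P = n -> general_position P ->
    0 < eps < 1 -> eps * INR n >= N0 ->
    0 < sigma <= 1 ->
    (1 <= r0)%nat ->
    (forall p q, Pi p q -> Pi q p) ->
    (forall p q, Pi p q -> In p P /\ In q P /\ p <> q) ->
    slab_system P r0 ys ->
    convex K ->
    restricted_witness P Pi K eps (sigma / 2) PK ->
    ~ crowded P ys K (C0 * sigma * eps) ->
    let eps0 := sigma * eps / (100 * INR r0) in
    exists i : nat, (i <= r0)%nat /\
      eps0 * INR n <= INR (pcount (in_slab ys i) PK) <= C0 * sigma * eps * INR n /\
      INR (pair_count (fun p q => Pi p q /\ crosses ys i p q) PK)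
        >= c * sigma * eps ^ 2 * INR n ^ 2 / INR r0.
Proof.
  exists (1/100), (1/100), 100.
  split; [lra|]. split; [lra|]. split; [lra|].
  intros P n eps sigma r0 Pi ys K PK Hnd Hlen Hgp Heps HN Hsig Hr0 Hsym HPi Hsl Hconv Hw Hnc eps0.
  destruct Hsl as [Hly [Hsort [Hoff Hbal]]].
  assert (Hs : sorted_ys ys) by (intros i Hi; apply Hsort; lia).
  unfold restricted_witness in Hw; cbv zeta in Hw.
  destruct Hw as [HndK [HinclK [HKK [HlenK HE]]]].
  rewrite Hlen in HlenK, HE.
  set (k := ceil_nat (eps * INR n)) in *.
  set (X := eps * INR n) in *.
  assert (HX0 : 100 <= X) by lra.
  assert (HkX : X <= INR k) by (apply ceil_ge; lra).
  assert (HR : 1 <= INR r0) by (replace 1 with (INR 1) by reflexivity; apply le_INR; lia).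
  set (cnt := fun j => pcount (in_slab ys j) PK).
  set (M := 1/100 * sigma * eps * INR n).
  assert (HM : M = sigma * X / 100) by (unfold M, X; field).
  assert (HMpos : 0 < M) by (rewrite HM; nra).
  assert (Hcnt : forall j, (j <= r0)%nat -> INR (cnt j) < M).
  { intros j Hj. destruct (Rlt_or_le (INR (cnt j)) M) as [h|h]; auto. exfalso. apply Hnc.
    exists j. split; [lia|]. exists (filter (fun p => decP (in_slab ys j p)) PK).
    split; [apply NoDup_filter; auto|]. split.
    { intros p Hp. apply filter_In in Hp. apply HinclK; tauto. }
    split.
    { intros p Hp. apply filter_In in Hp. destruct Hp as [Hp Hd]. split; [auto|apply decP_inv; auto]. }
    rewrite Hlen. apply Rle_ge. exact h. }
  set (m0 := eps0 * INR n).
  assert (Hm0 : m0 = sigma * X / (100 * INR r0)) by (unfold m0, eps0, X; field; lra).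
  assert (Hm0pos : 0 < m0).
  { rewrite Hm0. apply Rdiv_lt_0_compat; nra. }
  set (heavy := fun j => (j <= r0)%nat /\ m0 <= INR (cnt j)).
  set (f := fun j => pair_count (fun p q => Pi p q /\ crosses ys j p q) PK).
  set (B := 1/100 * sigma * eps ^ 2 * INR n ^ 2 / INR r0).
  assert (HBX : B = sigma * X ^ 2 / (100 * INR r0)) by (unfold B, X; field; lra).
  assert (HBpos : 0 < B) by (rewrite HBX; apply Rdiv_lt_0_compat; nra).
  apply NNPP; intro Hno.
  assert (HB : forall j, heavy j -> INR (f j) < B).
  { intros j [Hj Hh]. destruct (Rlt_or_le (INR (f j)) B) as [h|h]; auto. exfalso; apply Hno.
    exists j. split; auto. split; [split; [exact Hh| left; apply Hcnt; auto]| apply Rle_ge; exact h]. }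
  assert (Hslab : forall x, In x PK -> exists a, (a <= r0)%nat /\ in_slab ys a x).
  { intros x Hx. rewrite <- Hly. apply slab_exists; [exact Hs|]. intros y Hy. apply Hoff; auto. }
  assert (Huniq : forall x a b, in_slab ys a x -> in_slab ys b x -> (a <= r0)%nat -> (b <= r0)%nat -> a = b).
  { intros x a b H1 H2 H3 H4. eapply slab_unique; eauto; lia. }
  set (js := seq 0 (S r0)).
  assert (Hjs : forall j, In j js <-> (j <= r0)%nat) by (intro j; unfold js; rewrite in_seq; lia).
  assert (Hljs : length js = S r0) by (unfold js; apply length_seq).
  set (L := fun x => exists j, In j js /\ (~ heavy j /\ in_slab ys j x)).
  set (near := fun x y => exists a b, heavy a /\ heavy b /\ in_slab ys a x /\ in_slab ys b y /\
      ~ (exists j, heavy j /\ ((a < j < b)%nat \/ (b < j < a)%nat))).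
  set (D := fun x y => exists j, In j js /\ (heavy j /\ Pi x y /\ crosses ys j x y)).
  assert (Hcl : (pair_count Pi PK <= pair_count (fun x y => ((L x \/ L y) \/ near x y) \/ D x y) PK)%nat).
  { apply pair_mono. intros x y Hx Hy Hxy.
    destruct (Hslab x Hx) as [a [Ha Hax]]. destruct (Hslab y Hy) as [b [Hb Hby]].
    destruct (classic (heavy a)) as [ha|ha];
      [| left; left; left; exists a; split; [apply Hjs; exact Ha| split; assumption]].
    destruct (classic (heavy b)) as [hb|hb];
      [| left; left; right; exists b; split; [apply Hjs; exact Hb| split; assumption]].
    destruct (classic (exists j, heavy j /\ ((a < j < b)%nat \/ (b < j < a)%nat))) as [[j [hj Hjb]]|hn].
    - right. exists j. split; [apply Hjs; apply hj|]. split; [auto|split; [auto|]].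
      eapply crossing; eauto; rewrite ?Hly; try lia; apply hj.
    - left; right. exists a, b; split; [exact ha|split; [exact hb|split; [exact Hax|split; [exact Hby|exact hn]]]]. }

  assert (HLc : INR (pcount L PK) <= INR (S r0) * m0).
  { unfold L. rewrite <- Hljs. apply (pcount_union (fun j x => ~ heavy j /\ in_slab ys j x)).
    intros j Hj. apply Hjs in Hj. destruct (classic (heavy j)) as [hh|hh].
    - assert (H0 : (pcount (fun x => ~heavy j /\ in_slab ys j x) PK <= pcount (fun _ => False) PK)%nat)
        by (apply pcount_mono; tauto).
      rewrite pcount_False in H0. replace (pcount _ PK) with 0%nat by lia. simpl. lra.
    - assert (H0 : (pcount (fun x => ~heavy j /\ in_slab ys j x) PK <= cnt j)%nat)
        by (unfold cnt; apply pcount_mono; tauto).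
      apply le_INR in H0.
      assert (INR (cnt j) < m0).
      { destruct (Rlt_or_le (INR (cnt j)) m0) as [h|h]; auto. exfalso; apply hh; split; auto. }
      lra. }
  assert (HLL : INR (pair_count (fun x y => L x \/ L y) PK) <= 2 * INR (pcount L PK) * INR k).
  { pose proof (pair_or (fun x y => L x) (fun x y => L y) PK) as H0. cbv beta in H0.
    apply le_INR in H0. rewrite plus_INR in H0.
    pose proof (pair_left L PK). pose proof (pair_right L PK). rewrite HlenK in *. lra. }
  assert (Hnear : INR (pair_count near PK) <= INR k * (3 * M)).
  { rewrite <- HlenK. apply pair_row. intros x Hx.
    destruct (Hslab x Hx) as [a0 [Ha0 Hax]].
    set (N1 := fun y => exists b, heavy b /\ (a0 < b)%nat /\ ~ (exists j, heavy j /\ (a0 < j < b)%nat) /\ in_slab ys b y).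
    set (N2 := fun y => exists b, heavy b /\ (b < a0)%nat /\ ~ (exists j, heavy j /\ (b < j < a0)%nat) /\ in_slab ys b y).
    assert (H1 : (pcount (near x) PK <= pcount (fun y => in_slab ys a0 y \/ (N1 y \/ N2 y)) PK)%nat).
    { apply pcount_mono. intros y Hy [a [b [ha [hb [Hxa [Hyb Hn]]]]]].
      assert (a = a0) by (apply (Huniq x); auto; apply ha). subst a.
      destruct (lt_eq_lt_dec a0 b) as [[h|h]|h].
      - right; left. exists b. split; [exact hb|split; [exact h|split; [|exact Hyb]]].
        intros [j [hj hjb]]; apply Hn; exists j; split; auto; lia.
      - left; subst; auto.
      - right; right. exists b. split; [exact hb|split; [exact h|split; [|exact Hyb]]].
        intros [j [hj hjb]]; apply Hn; exists j; split; auto; lia. }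
    pose proof (pcount_or (in_slab ys a0) (fun y => N1 y \/ N2 y) PK) as H2. cbv beta in H2.
    pose proof (pcount_or N1 N2 PK) as H3. cbv beta in H3.
    assert (HN1 : INR (pcount N1 PK) <= M).
    { destruct (classic (exists b, heavy b /\ (a0 < b)%nat /\ ~ (exists j, heavy j /\ (a0 < j < b)%nat))) as [[b0 [hb0 [hab0 hn0]]]|hno].
      - assert (H0 : (pcount N1 PK <= cnt b0)%nat).
        { unfold cnt. apply pcount_mono. intros y Hy [b [hb [hab [hn Hyb]]]].
          assert (b = b0).
          { destruct (lt_eq_lt_dec b b0) as [[h|h]|h]; auto; exfalso.
            - apply hn0. exists b; split; auto; lia.
            - apply hn. exists b0; split; auto; lia. }
          subst; auto. }
        apply le_INR in H0. pose proof (Hcnt b0 (proj1 hb0)). lra.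
      - assert (H0 : (pcount N1 PK <= pcount (fun _ => False) PK)%nat).
        { apply pcount_mono. intros y _ [b [hb [hab [hn _]]]]. apply hno. exists b; auto. }
        rewrite pcount_False in H0. replace (pcount N1 PK) with 0%nat by lia. simpl; lra. }
    assert (HN2 : INR (pcount N2 PK) <= M).
    { destruct (classic (exists b, heavy b /\ (b < a0)%nat /\ ~ (exists j, heavy j /\ (b < j < a0)%nat))) as [[b0 [hb0 [hab0 hn0]]]|hno].
      - assert (H0 : (pcount N2 PK <= cnt b0)%nat).
        { unfold cnt. apply pcount_mono. intros y Hy [b [hb [hab [hn Hyb]]]].
          assert (b = b0).
          { destruct (lt_eq_lt_dec b b0) as [[h|h]|h]; auto; exfalso.
            - apply hn. exists b0; split; auto; lia.
            - apply hn0. exists b; split; auto; lia. }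
          subst; auto. }
        apply le_INR in H0. pose proof (Hcnt b0 (proj1 hb0)). lra.
      - assert (H0 : (pcount N2 PK <= pcount (fun _ => False) PK)%nat).
        { apply pcount_mono. intros y _ [b [hb [hab [hn _]]]]. apply hno. exists b; auto. }
        rewrite pcount_False in H0. replace (pcount N2 PK) with 0%nat by lia. simpl; lra. }
    pose proof (Hcnt a0 Ha0) as H4. unfold cnt in H4.
    assert (H5 : (pcount (near x) PK <= pcount (in_slab ys a0) PK + (pcount N1 PK + pcount N2 PK))%nat) by lia.
    apply le_INR in H5. rewrite !plus_INR in H5. lra. }
  assert (HD : INR (pair_count D PK) <= INR (S r0) * B).
  { unfold D. rewrite <- Hljs. apply (pair_union (fun j x y => heavy j /\ Pi x y /\ crosses ys j x y)).
    intros j Hj. destruct (classic (heavy j)) as [hh|hh].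
    - assert (H0 : (pair_count (fun x y => heavy j /\ Pi x y /\ crosses ys j x y) PK <= f j)%nat)
        by (unfold f; apply pair_mono; tauto).
      apply le_INR in H0. pose proof (HB j hh). lra.
    - assert (H0 : (pair_count (fun x y => heavy j /\ Pi x y /\ crosses ys j x y) PK <= pair_count (fun _ _ => False) PK)%nat)
        by (apply pair_mono; tauto).
      rewrite pair_False in H0. replace (pair_count _ PK) with 0%nat by lia. simpl; lra. }
  pose proof (pair_or (fun x y => (L x \/ L y) \/ near x y) D PK) as H1. cbv beta in H1.
  pose proof (pair_or (fun x y => L x \/ L y) near PK) as H2. cbv beta in H2.
  assert (Htot : (pair_count Pi PK <= pair_count (fun x y => L x \/ L y) PK + pair_count near PK + pair_count D PK)%nat) by lia.
  apply le_INR in Htot. rewrite !plus_INR in Htot.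
  rewrite S_INR in HLc, HD.
  set (R := INR r0) in *. set (kR := INR k) in *.
  assert (HiR : 0 < / R <= 1).
  { split; [apply Rinv_0_lt_compat; lra|]. rewrite <- Rinv_1. apply Rinv_le_contravar; lra. }
  assert (Ha : (R + 1) * m0 <= sigma * kR / 50).
  { replace ((R + 1) * m0) with (sigma * X / 100 * (1 + / R)) by (rewrite Hm0; field; lra).
    assert (0 < sigma * X) by nra. nra. }
  assert (Hb : (R + 1) * B <= sigma * kR ^ 2 / 50).
  { replace ((R + 1) * B) with (sigma * X ^ 2 / 100 * (1 + / R)) by (rewrite HBX; field; lra).
    assert (X ^ 2 <= kR ^ 2) by nra.
    assert (0 < sigma * X ^ 2) by nra. nra. }
  unfold binom2 in HE. fold kR in HE.
  assert (Hk0 : 0 <= INR (pcount L PK)) by apply pos_INR.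
  assert (H3 : 2 * INR (pcount L PK) * kR <= 2 * (sigma * kR / 50) * kR) by nra.
  assert (H4 : kR * (3 * M) <= 3 * sigma * kR ^ 2 / 100) by (rewrite HM; nra).
  assert (H5 : 0 < sigma * kR * (0.16 * kR - 0.25)).
  { apply Rmult_lt_0_compat; [nra|lra]. }
  nra.
Qed.
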